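(* Let $[a,b]\subset(0,1)$ and let $M$ be a differential module on $\Delta_{[a,b]}$ satisfying the Robba condition. Let $L$ be the rank one differential module defined by $\frac{\mathrm{d}}{\mathrm{d}x}-\frac{\pi}{x^2}$, restricted to $\Delta_{[a,b]}$. Then $\mathrm{H}^0_{\mathrm{DR}}(\Delta_{[a,b]},M\otimes L)=0$.
   Context: $K$ is a complete ultrametric field of characteristic $0$ with residue field of characteristic $p>0$, containing $\pi$ with $\pi^{p-1}+p=0$. $\Delta_I$ is the rigid annulus $\{x\in K^{\mathrm{alg}}:|x|\in I\}$ with structure sheaf $\mathcal{O}$; a differential module over $\Delta_I$ is a finite free $\mathcal{O}$-module with integrable connection. $F_\rho$ is the completion of $K(x)$ for the $\rho$-Gauss norm, $M\otimes F_\rho$ the induced differential module with $D=\nabla_{\mathrm{d}/\mathrm{d}x}$; its radius of convergence is $\mathrm{R}=|\pi|\cdot|D|_{\mathrm{sp}}^{-1}$ where $|D|_{\mathrm{sp}}=\lim_s|D^s|^{1/s}$. $M$ satisfies the Robba condition if $\mathrm{R}(M\otimes F_\rho)=\rho$ for all $\rho\in I$. $\mathrm{H}^0_{\mathrm{DR}}$ denotes global horizontal sections. *)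

(* Defs.v *)
From HB Require Import structures.
From Stdlib Require Import ClassicalEpsilon.
From mathcomp Require Import all_boot all_order all_algebra.
From mathcomp Require Import all_classical all_reals all_analysis.
Set Implicit Arguments. Unset Strict Implicit. Unset Printing Implicit Defensive.
Import Order.TTheory GRing.Theory Num.Theory.
Local Open Scope ring_scope.
Local Open Scope classical_set_scope.

Section PadicDiffMod.
Variables (R : realType) (K : fieldType) (absK : K -> R).

Definition ultrametric_abs : Prop :=
  [/\ forall x, absK x = 0 <-> x = 0,
      forall x y, absK (x * y) = absK x * absK y &
      forall x y, absK (x + y) <= Num.max (absK x) (absK y)].

Definition K_cvg (u : nat -> K) (l : K) : Prop :=
  forall e : R, 0 < e -> exists N : nat, forall m, (N <= m)%N -> absK (u m - l) < e.
Definition K_cauchy (u : nat -> K) : Prop :=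
  forall e : R, 0 < e -> exists N : nat, forall m k, (N <= m)%N -> (N <= k)%N ->
    absK (u m - u k) < e.
Definition K_complete : Prop := forall u, K_cauchy u -> exists l, K_cvg u l.

(** Laurent series  sum_{n in Z} c_n x^n  are coefficient functions int -> K. *)
Definition lser := int -> K.

(** f is an analytic function on the annulus Delta_[a,b]:
    |c_n| r^n -> 0 as |n| -> oo, for every r in [a,b]. *)
Definition analytic_on (a b : R) (f : lser) : Prop :=
  forall r : R, a <= r <= b -> forall e : R, 0 < e ->
    exists N : nat, forall m : int, (N <= `|m|)%N -> absK (f m) * r ^ m < e.

Definition tsum_to (u : int -> K) (l : K) : Prop :=
  forall e : R, 0 < e -> exists N : nat, forall m1 m2 : nat,
    (N <= m1)%N -> (N <= m2)%N ->
    absK ((\sum_(i < m1 + m2) u (i%:Z - m1%:Z)) - l) < e.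
Definition tsum (u : int -> K) : K := epsilon (inhabits 0) (tsum_to u).

Definition lmul (f g : lser) : lser := fun m => tsum (fun k => f k * g (m - k)).
Definition lderiv (f : lser) : lser := fun m => (m + 1)%:~R * f (m + 1).

Definition poly_ser (q : {poly K}) : lser :=
  fun m => match m with Posz k => q`_k | Negz _ => 0 end.

Definition gnorm (rho : R) (f : lser) : R := sup [set absK (f m) * rho ^ m | m in setT].

Variable n : nat.
(** A differential module M over Delta_I, free of rank n, in a chosen basis:
    D = nabla_{d/dx} acts on O^n by  D v = v' + G v. *)
Definition conn (G : 'I_n -> 'I_n -> lser) (v : 'I_n -> lser) : 'I_n -> lser :=
  fun i m => lderiv (v i) m + \sum_(j < n) lmul (G i j) (v j) m.

(** sup norm on (M (x) F_rho) = F_rho^n in the chosen basis *)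
Definition vnorm (rho : R) (v : 'I_n -> lser) : R := \big[Num.max/0]_(i < n) gnorm rho (v i).

(** D^s (w / q) = (Dnum s) / q^(s+1), computed via
    D (u / q^k) = (q D u - k q' u) / q^(k+1). *)
Definition Dstep (G : 'I_n -> 'I_n -> lser) (q : {poly K}) (u : 'I_n -> lser) (k : nat) :
  'I_n -> lser :=
  fun i m => lmul (poly_ser q) (conn G u i) m - k%:R * lmul (poly_ser q^`()) (u i) m.
Fixpoint Dnum (G : 'I_n -> 'I_n -> lser) (q : {poly K}) (w : 'I_n -> lser) (s : nat) :
  'I_n -> lser :=
  match s with 0%N => w | s'.+1 => Dstep G q (Dnum G q w s') s'.+1 end.

(** Operator norm |D^s| on M (x) F_rho, computed on the dense subset of
    elements w/q (w in O(Delta_[a,b])^n, q in K[x] nonzero) of F_rho^n. *)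
Definition opnorm_pow (a b : R) (G : 'I_n -> 'I_n -> lser) (rho : R) (s : nat) : R :=
  sup [set t : R | exists (w : 'I_n -> lser) (q : {poly K}),
         [/\ forall i, analytic_on a b (w i), q != 0, vnorm rho w != 0 &
             t = vnorm rho (Dnum G q w s) / (vnorm rho w * gnorm rho (poly_ser q) ^+ s)]].

Definition spec_norm (a b : R) (G : 'I_n -> 'I_n -> lser) (rho : R) : R :=
  limn (fun s : nat => powR (opnorm_pow a b G rho s) (s%:R)^-1).

Definition radius (pi : K) (a b : R) (G : 'I_n -> 'I_n -> lser) (rho : R) : R :=
  absK pi / spec_norm a b G rho.

Definition robba (pi : K) (a b : R) (G : 'I_n -> 'I_n -> lser) : Prop :=
  forall rho : R, a <= rho <= b -> radius pi a b G rho = rho.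

(** Matrix of M (x) L, where L = (O, d/dx - pi/x^2):
    D = d/dx + G - (pi x^-2) Id. *)
Definition tensorL (pi : K) (G : 'I_n -> 'I_n -> lser) : 'I_n -> 'I_n -> lser :=
  fun i j m => G i j m - (if (i == j) && (m == -2) then pi else 0).

End PadicDiffMod.

(* Main.v *)
From Pilot Require Import Defs.
From Stdlib Require Import ClassicalEpsilon.
From mathcomp Require Import all_boot all_order all_algebra.
From mathcomp Require Import all_classical all_reals all_analysis.
From mathcomp Require Import zify ring lra.
Set Implicit Arguments. Unset Strict Implicit. Unset Printing Implicit Defensive.
Import Order.TTheory GRing.Theory Num.Theory.
Local Open Scope ring_scope.


Section Abs.
Variables (R : realType) (K : fieldType) (absK : K -> R).
Variable (p : nat).
Hypothesis Hu : ultrametric_abs absK.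
Hypothesis Hp1 : absK p%:R < 1.
Hypothesis Hp0 : (0 < p)%N.

Lemma absK0 : absK 0 = 0.
Proof. by case: Hu => H _ _; apply/H. Qed.
Lemma absK_eq0 x : (absK x == 0) = (x == 0).
Proof. by case: Hu => H _ _; apply/eqP/eqP => /H. Qed.
Lemma absKM x y : absK (x * y) = absK x * absK y.
Proof. by case: Hu. Qed.
Lemma absKD x y : absK (x + y) <= Num.max (absK x) (absK y).
Proof. by case: Hu. Qed.
Lemma absK1 : absK 1 = 1.
Proof.
have h : absK 1 * absK 1 = absK 1 * 1 by rewrite -absKM !mulr1.
have h1 : absK 1 != 0 by rewrite absK_eq0 oner_eq0.
by move/(mulfI h1): h.
Qed.
Lemma absK_nat m : absK m%:R <= 1.
Proof.
elim: m => [|m IH]; first by rewrite absK0 ler01.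
rewrite -addn1 natrD; apply: le_trans (absKD _ _) _.
by rewrite ge_max IH absK1 lexx.
Qed.
Lemma absKN1 : absK (-1) = 1.
Proof.
have h : absK (-1) * absK (-1) = 1 by rewrite -absKM mulrNN mulr1 absK1.
have : absK (-1) ^+ 2 = 1 by rewrite expr2.
move/eqP; rewrite sqrf_eq1 => /orP[/eqP//|/eqP hm].
exfalso.
have key : forall m, absK (- (m.+1)%:R) <= -1.
  elim=> [|m IH]; first by rewrite hm.
  rewrite -addn1 natrD opprD; apply: le_trans (absKD _ _) _.
  by rewrite ge_max IH hm lexx.
have := key p.-1; rewrite prednK // -mulN1r absKM hm mulN1r lerN2.
by rewrite leNgt Hp1.
Qed.
Lemma absKN x : absK (- x) = absK x.
Proof. by rewrite -mulN1r absKM absKN1 mul1r. Qed.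
Lemma absK_ge0 x : 0 <= absK x.
Proof.
have := absKD x (- x); rewrite subrr absK0 absKN.
by rewrite maxxx.
Qed.
Lemma absKB x y : absK (x - y) = absK (y - x).
Proof. by rewrite -absKN opprB. Qed.
Lemma absKD_lt x y t : absK x < t -> absK y < t -> absK (x + y) < t.
Proof. by move=> hx hy; apply: le_lt_trans (absKD _ _) _; rewrite gt_max hx hy. Qed.
Lemma absK_sum_lt (I : Type) (r : seq I) (P : pred I) (F : I -> K) t :
  0 < t -> (forall i, P i -> absK (F i) < t) -> absK (\sum_(i <- r | P i) F i) < t.
Proof.
move=> t0 H; elim/big_rec: _ => [|i x Pi IH]; first by rewrite absK0.
exact: absKD_lt (H _ Pi) IH.
Qed.
Lemma absK_dom x y : absK y < absK x -> absK (x + y) = absK x.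
Proof.
move=> h; apply/eqP; rewrite eq_le; apply/andP; split.
  by apply: le_trans (absKD _ _) _; rewrite ge_max lexx (ltW h).
have := absKD (x + y) (- y); rewrite addrK absKN => h2.
move: h2; rewrite le_max => /orP[//|h3].
by exfalso; move: (le_lt_trans h3 h); rewrite ltxx.
Qed.
End Abs.


Section Ser.
Variables (R : realType) (K : fieldType) (absK : K -> R).
Variable (p : nat).
Hypothesis Hu : ultrametric_abs absK.
Hypothesis Hp1 : absK p%:R < 1.
Hypothesis Hp0 : (0 < p)%N.
Hypothesis Hc : K_complete absK.

Local Notation aN := (absKN Hu Hp1 Hp0).
Local Notation aB := (absKB Hu Hp1 Hp0).
Local Notation a0 := (absK0 Hu).
Local Notation aM := (absKM Hu).
Local Notation aDlt := (absKD_lt Hu).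
Local Notation asum := (absK_sum_lt Hu).

Lemma onesided (w : nat -> K) :
  (forall e : R, 0 < e -> exists N : nat, forall i, (N <= i)%N -> absK (w i) < e) ->
  exists l, forall e : R, 0 < e -> exists N : nat, forall m, (N <= m)%N ->
    absK (\sum_(i < m) w i - l) < e.
Proof.
move=> dec.
have cau : K_cauchy absK (fun m => \sum_(i < m) w i).
  move=> e e0; have [N HN] := dec e e0; exists N => m k Nm Nk.
  wlog km : m k Nm Nk / (k <= m)%N.
    move=> H; case: (leqP k m) => h; first exact: H.
    by rewrite aB; apply: H => //; apply: ltnW.
  rewrite -!(big_mkord xpredT) (big_cat_nat (leq0n k) km) /= addrC addrK.
  rewrite big_nat_cond; apply: asum => // i /andP[/andP[ki _] _].
  apply: HN; exact: leq_trans Nk ki.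
have [l Hl] := Hc cau; exists l => e e0; have [N HN] := Hl e e0.
by exists N => m Nm; apply: HN.
Qed.

Lemma window_split (u : int -> K) (m1 m2 : nat) :
  \sum_(i < m1 + m2) u (i%:Z - m1%:Z) =
  \sum_(i < m1) u (- (i.+1)%:Z) + \sum_(i < m2) u i%:Z.
Proof.
rewrite big_split_ord /=; congr (_ + _).
  rewrite (reindex_inj rev_ord_inj) /=; apply: eq_bigr => i _.
  congr u; have := ltn_ord i; lia.
apply: eq_bigr => i _; congr u; lia.
Qed.

Lemma tsum_to_split (u : int -> K) lN lP :
  (forall e : R, 0 < e -> exists N : nat, forall m, (N <= m)%N ->
    absK (\sum_(i < m) u (- (i.+1)%:Z) - lN) < e) ->
  (forall e : R, 0 < e -> exists N : nat, forall m, (N <= m)%N ->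
    absK (\sum_(i < m) u i%:Z - lP) < e) ->
  tsum_to absK u (lN + lP).
Proof.
move=> HN HP e e0; have [N1 H1] := HN e e0; have [N2 H2] := HP e e0.
exists (maxn N1 N2) => m1 m2 h1 h2; rewrite window_split.
rewrite opprD addrACA; apply: aDlt.
  by apply: H1; apply: leq_trans h1; apply: leq_maxl.
by apply: H2; apply: leq_trans h2; apply: leq_maxr.
Qed.

Definition decays (u : int -> K) :=
  forall e : R, 0 < e -> exists N : nat, forall k : int, (N <= `|k|)%N -> absK (u k) < e.

Lemma tsum_conv u : decays u -> exists l, tsum_to absK u l.
Proof.
move=> du.
have d1 : forall e : R, 0 < e -> exists N : nat, forall i, (N <= i)%N -> absK (u (- (i.+1)%:Z)) < e.
  move=> e e0; have [N HN] := du e e0; exists N => i Ni; apply: HN.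
  by rewrite abszN absz_nat; apply: leq_trans Ni _.
have d2 : forall e : R, 0 < e -> exists N : nat, forall i, (N <= i)%N -> absK (u i%:Z) < e.
  move=> e e0; have [N HN] := du e e0; exists N => i Ni; apply: HN.
  by rewrite absz_nat.
have [lN HN] := onesided d1.
have [lP HP] := onesided d2.
by exists (lN + lP); apply: tsum_to_split.
Qed.

Lemma tsum_uniq u l1 l2 : tsum_to absK u l1 -> tsum_to absK u l2 -> l1 = l2.
Proof.
move=> h1 h2; apply/eqP; rewrite -subr_eq0 -(absK_eq0 Hu); apply/negPn/negP => ne.
have e0 : 0 < absK (l1 - l2) by rewrite lt_def ne (absK_ge0 Hu Hp1 Hp0).
have [N1 H1] := h1 _ e0; have [N2 H2] := h2 _ e0.
set S := \sum_(i < maxn N1 N2 + maxn N1 N2) u (i%:Z - (maxn N1 N2)%:Z).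
have E : l1 - l2 = (S - l2) - (S - l1) by ring.
have : absK (l1 - l2) < absK (l1 - l2).
  rewrite {1}E; apply: aDlt; first by apply: H2; rewrite leq_maxr.
  by rewrite aN; apply: H1; rewrite leq_maxl.
by rewrite ltxx.
Qed.

Lemma tsumE u l : tsum_to absK u l -> tsum absK u = l.
Proof.
move=> h; rewrite /tsum; apply: (tsum_uniq _ h).
by apply: epsilon_spec; exists l.
Qed.

Lemma tsum_to_add u v l l' : tsum_to absK u l -> tsum_to absK v l' ->
  tsum_to absK (fun k => u k + v k) (l + l').
Proof.
move=> h h' e e0; have [N1 H1] := h e e0; have [N2 H2] := h' e e0.
exists (maxn N1 N2) => m1 m2 a1 a2; rewrite big_split /= opprD addrACA.
apply: aDlt; [apply: H1|apply: H2]; lia.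
Qed.

Lemma tsum_to_zero : tsum_to absK (fun _ => 0) 0.
Proof. by move=> e e0; exists 0%N => m1 m2 _ _; rewrite big1 // subrr a0. Qed.

Lemma tsum_to_scale c u l : tsum_to absK u l ->
  tsum_to absK (fun k => c * u k) (c * l).
Proof.
move=> h; have [->|c0] := eqVneq c 0.
  under eq_fun do rewrite mul0r. by rewrite mul0r; apply: tsum_to_zero.
have ac : 0 < absK c by rewrite lt_def (absK_eq0 Hu) c0 (absK_ge0 Hu Hp1 Hp0).
move=> e e0; have [N HN] := h (e / absK c) (divr_gt0 e0 ac).
exists N => m1 m2 a1 a2; rewrite -mulr_sumr -mulrBr aM.
by rewrite -ltr_pdivlMl // mulrC; apply: HN.
Qed.

Lemma tsum_to_sum (N : nat) (u : 'I_N -> int -> K) (l : 'I_N -> K) :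
  (forall j, tsum_to absK (u j) (l j)) ->
  tsum_to absK (fun k => \sum_(j < N) u j k) (\sum_(j < N) l j).
Proof.
elim: N u l => [|N IH] u l H.
  by under eq_fun do rewrite big_ord0; rewrite big_ord0; apply: tsum_to_zero.
under eq_fun do rewrite big_ord_recr /=; rewrite big_ord_recr /=.
apply: (@tsum_to_add (fun k => \sum_(i < N) u (widen_ord (leqnSn N) i) k) (u ord_max)); last exact: H.
exact: (IH (fun j => u (widen_ord (leqnSn N) j)) (fun j => l (widen_ord (leqnSn N) j)) (fun j => H _)).
Qed.

Lemma sum_ind (n j : nat) (c : K) : (j < n)%N ->
  \sum_(i < n) (if (i : nat) == j then c else 0) = c.
Proof.
elim: n => [//|n IH] jn; rewrite big_ord_recr /=.
case: (ltngtP j n) => h.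
- by rewrite IH // addr0.
- lia.
- rewrite big1 ?add0r // => i _; rewrite ifF //; apply/eqP => e; have := ltn_ord i; lia.
Qed.

Lemma tsum_to_delta (k0 : int) (c : K) :
  tsum_to absK (fun k => if k == k0 then c else 0) c.
Proof.
move=> e e0; exists `|k0|.+1 => m1 m2 a1 a2.
have hj : 0 <= m1%:Z + k0 by lia.
rewrite (eq_bigr (fun i : 'I_(m1 + m2) => if (i : nat) == absz (m1%:Z + k0) then c else 0)).
  by rewrite sum_ind ?subrr ?a0 //; lia.
by move=> i _; congr (if _ then _ else _); apply/eqP/eqP; lia.
Qed.

Definition adec (r : R) (g : int -> K) := forall e : R, 0 < e ->
  exists N : nat, forall m : int, (N <= `|m|)%N -> absK (g m) * r ^ m < e.

Lemma prod_decays (r : R) g v (m : int) : 0 < r -> adec r g -> adec r v ->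
  decays (fun k => g k * v (m - k)).
Proof.
move=> r0 dg dv e e0.
have rm0 : 0 < r ^ m := exprz_gt0 m r0.
have [N1 H1] := dg 1 ltr01.
have [N2 H2] := dv (e * r ^ m) (mulr_gt0 e0 rm0).
exists (N1 + N2 + `|m|)%N => k hk.
have hA := H1 k ltac:(lia).
have hB := H2 (m - k) ltac:(lia).
have A0 : 0 <= absK (g k) * r ^ k by rewrite mulr_ge0 ?(absK_ge0 Hu Hp1 Hp0) ?ltW ?exprz_gt0.
have B0 : 0 <= absK (v (m - k)) * r ^ (m - k) by rewrite mulr_ge0 ?(absK_ge0 Hu Hp1 Hp0) ?ltW ?exprz_gt0.
have E : absK (g k * v (m - k)) =
  (absK (g k) * r ^ k) * (absK (v (m - k)) * r ^ (m - k)) / r ^ m.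
  rewrite aM mulrACA -expfzDr ?gt_eqF //.
  have -> : k + (m - k) = m by ring.
  by rewrite mulfK ?gt_eqF.
rewrite E ltr_pdivrMr //.
apply: le_lt_trans hB; rewrite -[X in _ <= X]mul1r ler_wpM2r //; exact: ltW.
Qed.
End Ser.


Section PM.
Variable (K : fieldType).

Definition pm (W : nat) (P v : int -> K) : int -> K :=
  fun m => \sum_(j < W.+1) P (- (j%:Z)) * v (m + j%:Z).

Definition suppd (W : nat) (P : int -> K) :=
  forall k : int, (k < - W%:Z) || (0 < k) -> P k = 0.

Lemma pm_widen W W' P v m : suppd W P -> (W <= W')%N -> pm W P v m = pm W' P v m.
Proof.
move=> sP le; rewrite /pm.
rewrite (big_ord_widen W'.+1 (fun j : nat => P (- (j%:Z)) * v (m + j%:Z))) //.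
rewrite big_mkcond /=; apply: eq_bigr => j _; case: ifP => // h.
by rewrite sP ?mul0r //; apply/orP; left; move: h; lia.
Qed.

Lemma lderiv_pm W P v m : suppd W P ->
  lderiv (pm W P v) m = pm W P (lderiv v) m + pm W.+1 (lderiv P) v m.
Proof.
move=> sP; rewrite /lderiv /pm.
rewrite [X in _ = _ + X]big_ord_recl /=.
rewrite (sP (- 0%:Z + 1)); last by apply/orP; right.
rewrite mulr0 mul0r add0r mulr_sumr -big_split /=; apply: eq_bigr => j _.
rewrite /bump /= add1n.
have -> : - (j.+1)%:Z + 1 = - j%:Z by lia.
have -> : m + (j.+1)%:Z = m + j%:Z + 1 by lia.
have -> : m + 1 + j%:Z = m + j%:Z + 1 by lia.
rewrite !intrD intrN; ring.
Qed.

Lemma pm_shift2 W P v c m : suppd W P ->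
  pm W P (fun m => c * v (m + 2)) m = pm W.+2 (fun k => c * P (k + 2)) v m.
Proof.
move=> sP; rewrite /pm [RHS]big_ord_recl /= [X in _ = _ + X]big_ord_recl /=.
rewrite (sP (- 0%:Z + 2)) ?(sP (- (bump 0 0)%:Z + 2)) ?mulr0 ?mul0r ?add0r; last first.
- by apply/orP; right.
- by apply/orP; right.
apply: eq_bigr => j _; rewrite /bump /=.
have -> : - ((1 + (1 + j))%N)%:Z + 2 = - j%:Z by lia.
have -> : m + ((1 + (1 + j))%N)%:Z = m + j%:Z + 2 by lia.
ring.
Qed.

Lemma pm_add W P a b m : pm W P (fun m => a m + b m) m = pm W P a m + pm W P b m.
Proof. by rewrite /pm -big_split /=; apply: eq_bigr => j _; rewrite mulrDr. Qed.
Lemma pm_sub W P a b m : pm W P (fun m => a m - b m) m = pm W P a m - pm W P b m.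
Proof. by rewrite /pm -sumrB /=; apply: eq_bigr => j _; rewrite mulrBr. Qed.
Lemma pm_addP W P1 P2 v m : pm W (fun k => P1 k + P2 k) v m = pm W P1 v m + pm W P2 v m.
Proof. by rewrite /pm -big_split /=; apply: eq_bigr => j _; rewrite mulrDl. Qed.
Lemma pm_sum W P (N : nat) (v : 'I_N -> int -> K) m :
  \sum_(l < N) pm W P (v l) m = pm W P (fun m => \sum_(l < N) v l m) m.
Proof.
rewrite /pm exchange_big /=; apply: eq_bigr => j _; by rewrite mulr_sumr.
Qed.
End PM.


Section Dn.
Variables (R : realType) (K : fieldType) (absK : K -> R).
Variable (p : nat).
Hypothesis Hu : ultrametric_abs absK.
Hypothesis Hp1 : absK p%:R < 1.
Hypothesis Hp0 : (0 < p)%N.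

Lemma poly_ser1 k : poly_ser (1 : {poly K}) k = if k == 0 then 1 else 0.
Proof. by case: k => [j|j] //=; rewrite -polyC1 coefC. Qed.

Lemma lmul_one (u : int -> K) m : lmul absK (poly_ser 1) u m = u m.
Proof.
rewrite /lmul; apply: (tsumE Hu Hp1 Hp0).
have -> : (fun k => poly_ser 1 k * u (m - k)) = (fun k => if k == 0 then u m else 0).
  apply: funext => k; rewrite poly_ser1; case: eqP => [->|_]; by rewrite ?mul1r ?subr0 ?mul0r.
exact: (tsum_to_delta Hu Hp1 Hp0).
Qed.

Lemma lmul_zero (u : int -> K) m : lmul absK (poly_ser 0) u m = 0.
Proof.
rewrite /lmul; apply: (tsumE Hu Hp1 Hp0).
have -> : (fun k => poly_ser 0 k * u (m - k)) = (fun k => 0).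
  by apply: funext => k; case: k => [j|j] /=; rewrite ?coef0 mul0r.
exact: (tsum_to_zero Hu).
Qed.

Variable n : nat.
Variable G : 'I_n -> 'I_n -> int -> K.

Lemma Dnum_succ (f : 'I_n -> int -> K) s i m :
  Dnum absK G 1 f s.+1 i m = conn absK G (Dnum absK G 1 f s) i m.
Proof.
rewrite /= /Dstep lmul_one -polyC1 derivC lmul_zero mulr0 subr0 //.
Qed.

Lemma tsum_spec (u : int -> K) : (exists l, tsum_to absK u l) -> tsum_to absK u (tsum absK u).
Proof. by move=> h; rewrite /tsum; apply: epsilon_spec. Qed.

Lemma lmul_pm (g v : int -> K) W P m :
  (forall m', exists L, tsum_to absK (fun k => g k * v (m' - k)) L) ->
  lmul absK g (pm W P v) m = pm W P (lmul absK g v) m.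
Proof.
move=> hc; rewrite /lmul /pm; apply: (tsumE Hu Hp1 Hp0).
have -> : (fun k => g k * \sum_(j < W.+1) P (- j%:Z) * v (m - k + j%:Z)) =
   (fun k => \sum_(j < W.+1) P (- j%:Z) * (g k * v ((m + j%:Z) - k))).
  apply: funext => k; rewrite mulr_sumr; apply: eq_bigr => j _.
  have -> : m + j%:Z - k = m - k + j%:Z by ring.
  ring.
apply: (@tsum_to_sum _ _ _ _ Hu Hp1 Hp0 W.+1 (fun j k => P (- (nat_of_ord j)%:Z) * (g k * v ((m + (nat_of_ord j)%:Z) - k)))
   (fun j => P (- (nat_of_ord j)%:Z) * tsum absK (fun k => g k * v ((m + (nat_of_ord j)%:Z) - k)))).
move=> j; apply: (tsum_to_scale Hu Hp1 Hp0); apply: tsum_spec; apply: hc.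
Qed.

Lemma lderiv_supp W (P : int -> K) : suppd W P -> suppd W.+1 (lderiv P).
Proof.
move=> sP k hk; rewrite /lderiv sP ?mulr0 //; move: hk; lia.
Qed.

Variable pi : K.
Variable f : 'I_n -> int -> K.
Hypothesis conv : forall i l m', exists L, tsum_to absK (fun k => G i l k * f l (m' - k)) L.
Hypothesis hor : forall i m, conn absK (tensorL pi G) f i m = 0.

Lemma hor_eq i m : \sum_(l < n) lmul absK (G i l) (f l) m = pi * f i (m + 2) - lderiv (f i) m.
Proof.
have E : forall l, lmul absK (tensorL pi G i l) (f l) m =
    lmul absK (G i l) (f l) m - (if l == i then pi * f l (m + 2) else 0).
  move=> l; have [L HL] := conv i l m.
  rewrite {2}/lmul (tsumE Hu Hp1 Hp0 HL) /lmul; apply: (tsumE Hu Hp1 Hp0).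
  case: (eqVneq l i) HL => [->|ne] HL.
    have -> : (fun k => tensorL pi G i i k * f i (m - k)) =
      (fun k => G i i k * f i (m - k) + (-1) * (if k == -2 then pi * f i (m + 2) else 0)).
      apply: funext => k; rewrite /tensorL eqxx /=; case: eqP => [->|_].
        have -> : m - -2 = m + 2 by ring.
        ring.
      ring.
    have -> : L - pi * f i (m + 2) = L + (-1) * (pi * f i (m + 2)) by ring.
    apply: (tsum_to_add Hu Hp1 Hp0) => //.
    apply: (tsum_to_scale Hu Hp1 Hp0); exact: (tsum_to_delta Hu Hp1 Hp0).
  have -> : (fun k => tensorL pi G i l k * f l (m - k)) = (fun k => G i l k * f l (m - k)).
    apply: funext => k; rewrite /tensorL.
    have -> : (i == l) = false by rewrite eq_sym (negbTE ne).
    by rewrite /= subr0.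
  by rewrite subr0.
have := hor i m; rewrite /conn.
under eq_bigr do rewrite E.
rewrite sumrB -big_mkcond big_pred1_eq => h.
apply/eqP; rewrite -subr_eq0; apply/eqP; rewrite -[RHS]h; ring.
Qed.

Fixpoint Pser (s : nat) : int -> K :=
  match s with
  | 0%N => fun k => if k == 0 then 1 else 0
  | s'.+1 => fun k => lderiv (Pser s') k + pi * Pser s' (k + 2)
  end.

Lemma Pser_supp s : suppd (2 * s) (Pser s).
Proof.
elim: s => [|s IH] k hk /=.
  by case: eqP => // e; move: hk; rewrite e; lia.
rewrite /lderiv !IH ?mulr0 ?addr0 //; move: hk; lia.
Qed.

Lemma Pser_lead s : Pser s (- (2 * s)%N%:Z) = pi ^+ s.
Proof.
elim: s => [|s IH] /=; first by rewrite ?mul0n ?eqxx ?expr0.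
rewrite /lderiv Pser_supp ?mulr0 ?add0r; last by lia.
have -> : - (2 * s.+1)%N%:Z + 2 = - (2 * s)%N%:Z by lia.
by rewrite IH exprS.
Qed.

Lemma Dnum_pm s i m : Dnum absK G 1 f s i m = pm (2 * s) (Pser s) (f i) m.
Proof.
elim: s i m => [|s IH] i m.
  by rewrite /= /pm big_ord1 /= mul1r addr0.
rewrite Dnum_succ.
have -> : Dnum absK G 1 f s = fun i m => pm (2 * s) (Pser s) (f i) m.
  by apply: funext => i'; apply: funext => m'; apply: IH.
rewrite /conn lderiv_pm; last exact: Pser_supp.
under eq_bigr do rewrite lmul_pm //.
rewrite pm_sum.
have -> : (fun m => \sum_(l < n) lmul absK (G i l) (f l) m) =
          (fun m => pi * f i (m + 2) - lderiv (f i) m).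
  by apply: funext => m'; apply: hor_eq.
rewrite pm_sub pm_shift2; last exact: Pser_supp.
have -> : (2 * s.+1 = (2 * s).+2)%N by lia.
rewrite [in RHS]/= pm_addP (@pm_widen _ (2 * s).+1 (2 * s).+2); last by [].
  ring.
apply: lderiv_supp; exact: Pser_supp.
Qed.
End Dn.


Section Att.
Variable R : realType.

Definition rdec (u : int -> R) := forall e : R, 0 < e ->
  exists N : nat, forall k : int, (N <= `|k|)%N -> u k < e.

Lemma attain_max (u : int -> R) k0 : rdec u -> 0 < u k0 ->
  exists ks, forall k, u k <= u ks.
Proof.
move=> du uk0; have [N HN] := du _ uk0.
have hk0 : (`|k0| < N)%N by rewrite ltnNge; apply/negP => /HN; rewrite ltxx.
have j0lt : (absz (k0 + N%:Z)%R < N + N)%N by lia.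
pose j0 := Ordinal j0lt.
have [i0 _ Hi0] := @eq_bigmax _ _ _ 0 j0 xpredT (fun j : 'I_(N + N) => Num.max 0 (u (j%:Z - N%:Z))) isT
  (fun i _ => ltac:(by rewrite le_max lexx)).
exists (i0%:Z - N%:Z) => k.
have M0 : u k0 <= Num.max 0 (u (i0%:Z - N%:Z)).
  rewrite -Hi0; apply: le_trans (le_bigmax _ _ j0); rewrite le_max /=.
  have -> : (absz (k0 + N%:Z)%R)%:Z - N%:Z = k0 by lia.
  by rewrite lexx orbT.
have Mpos : Num.max 0 (u (i0%:Z - N%:Z)) = u (i0%:Z - N%:Z).
  apply/max_idPr; apply: le_trans (ltW uk0) _; move: M0; rewrite le_max => /orP[h|//].
  by exfalso; move: (lt_le_trans uk0 h); rewrite ltxx.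
case: (leqP N `|k|) => hk.
  by apply: le_trans (ltW (HN _ hk)) _; rewrite -Mpos.
have jlt : (absz (k + N%:Z)%R < N + N)%N by lia.
rewrite -Mpos -Hi0; apply: le_trans (le_bigmax _ _ (Ordinal jlt)); rewrite le_max /=.
have -> : (absz (k + N%:Z)%R)%:Z - N%:Z = k by lia.
by rewrite lexx orbT.
Qed.

Lemma attain_min (u : int -> R) k0 : rdec u -> 0 < u k0 ->
  exists ks, (forall k, u k <= u ks) /\ (forall k, k < ks -> u k < u ks).
Proof.
move=> du uk0; have [km Hkm] := attain_max du uk0.
have [N HN] := du _ uk0.
pose P := fun t : nat => `[< forall k, u k <= u (t%:Z - N%:Z) >].
have hkm : (`|km| < N)%N.
  rewrite ltnNge; apply/negP => /HN h; have := Hkm k0.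
  by rewrite leNgt h.
have exP : exists t, P t.
  exists (absz (km + N%:Z)%R); apply/asboolP => k.
  have -> : (absz (km + N%:Z)%R)%:Z - N%:Z = km by lia.
  exact: Hkm.
case: (ex_minnP exP) => t /asboolP Pt tmin.
exists (t%:Z - N%:Z); split => // k hk.
have ukm := Pt km.
have uks : u k0 <= u (t%:Z - N%:Z) by apply: Pt.
case: (leqP N `|k|) => hN.
  by apply: lt_le_trans (HN _ hN) uks.
rewrite lt_neqAle Pt andbT; apply/eqP => e.
have : (t <= absz (k + N%:Z)%R)%N.
  apply: tmin; apply/asboolP => j.
  have -> : (absz (k + N%:Z)%R)%:Z - N%:Z = k by lia.
  by rewrite e; apply: Pt.
lia.
Qed.
End Att.


Local Open Scope classical_set_scope.

Section Gn.
Variables (R : realType) (K : fieldType) (absK : K -> R).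
Variable (p : nat).
Hypothesis Hu : ultrametric_abs absK.
Hypothesis Hp1 : absK p%:R < 1.
Hypothesis Hp0 : (0 < p)%N.
Variable r : R.
Hypothesis r0 : 0 < r.

Local Notation ag0 := (absK_ge0 Hu Hp1 Hp0).

Definition uof (v : int -> K) : int -> R := fun m => absK (v m) * r ^ m.

Lemma term_ge0 x (k : int) : 0 <= absK x * r ^ k.
Proof. by apply: mulr_ge0; [apply: ag0| apply: ltW; apply: exprz_gt0]. Qed.

Lemma uof_ge0 v m : 0 <= uof v m.
Proof. exact: term_ge0. Qed.

Lemma gnorm_set_ub v : adec absK r v -> has_ubound [set uof v m | m in setT].
Proof.
move=> dv.
have dr : rdec (uof v) by move=> e e0; have [N HN] := dv e e0; exists N.
case: (pselect (exists k0, 0 < uof v k0)) => [[k0 hk0]|nk].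
  have [ks Hks] := attain_max dr hk0; exists (uof v ks) => _ [m _ <-]; exact: Hks.
exists 0 => _ [m _ <-]; rewrite leNgt; apply/negP => h; apply: nk; by exists m.
Qed.

Lemma gnorm_ge v m : adec absK r v -> uof v m <= Pilot.Defs.gnorm absK r v.
Proof. by move=> dv; apply: ub_le_sup (gnorm_set_ub dv) _ _; exists m. Qed.

Lemma gnorm_ge0 v : adec absK r v -> 0 <= Pilot.Defs.gnorm absK r v.
Proof. by move=> dv; apply: le_trans (uof_ge0 v 0) (gnorm_ge 0 dv). Qed.

Lemma gnorm_max v ks : (forall k, uof v k <= uof v ks) -> Pilot.Defs.gnorm absK r v = uof v ks.
Proof.
move=> H; apply/eqP; rewrite eq_le; apply/andP; split.
  by apply: ge_sup; [exists (uof v ks); exists ks | move=> _ [m _ <-]; apply: H].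
by apply: ub_le_sup; [exists (uof v ks) => _ [m _ <-]; apply: H| exists ks].
Qed.

Lemma adec_pm W P v : adec absK r v -> adec absK r (pm W P v).
Proof.
move=> dv e e0.
pose C := 1 + \sum_(j < W.+1) absK (P (- j%:Z)) * r ^ (- j%:Z).
have hC0 : 0 < C.
  rewrite /C ltr_pwDl // sumr_ge0 // => j _; by apply: term_ge0.
have [N HN] := dv (e / C) (divr_gt0 e0 hC0).
exists (N + W)%N => m hm; rewrite /pm.
have rm0 : 0 < r ^ m := exprz_gt0 m r0.
rewrite -ltr_pdivlMr // .
apply: (absK_sum_lt Hu) => [|j _]; first exact: divr_gt0.
rewrite ltr_pdivlMr // (absKM Hu).
have -> : absK (P (- j%:Z)) * absK (v (m + j%:Z)) * r ^ m =
   (absK (P (- j%:Z)) * r ^ (- j%:Z)) * (absK (v (m + j%:Z)) * r ^ (m + j%:Z)).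
  rewrite mulrACA -expfzDr ?gt_eqF //; congr (_ * _ * r ^ _); ring.
have hj := ltn_ord j.
have hv := HN (m + j%:Z) ltac:(lia).
have b0 : 0 <= absK (v (m + j%:Z)) * r ^ (m + j%:Z) by apply: term_ge0.
have a0 : 0 <= absK (P (- j%:Z)) * r ^ (- j%:Z) by apply: term_ge0.
have aC : absK (P (- j%:Z)) * r ^ (- j%:Z) <= C.
  rewrite /C (bigD1 j) //= addrA ler_wpDr ?ler_wpDl //.
  by rewrite sumr_ge0 // => i _; by apply: term_ge0.
apply: le_lt_trans (ler_wpM2r b0 aC) _.
by rewrite mulrC -ltr_pdivlMr.
Qed.

Lemma prod_lt (a A b B : R) : 0 <= a -> a < A -> 0 <= b -> b <= B -> 0 < B -> a * b < A * B.
Proof. move=> a0 aA b0 bB B0; apply: le_lt_trans (ler_wpM2l a0 bB) _; by rewrite ltr_pM2r. Qed.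

Lemma pm_lower W P v k1 : adec absK r v -> suppd W P ->
  uof P k1 * Pilot.Defs.gnorm absK r v <= Pilot.Defs.gnorm absK r (pm W P v).
Proof.
move=> dv sP.
have dQ := adec_pm W P dv.
have gQ0 := gnorm_ge0 dQ.
case: (pselect (exists k0, 0 < uof v k0)) => [[k0 hk0]|nk]; last first.
  have -> : Pilot.Defs.gnorm absK r v = 0.
    apply/eqP; rewrite eq_le gnorm_ge0 // andbT.
    apply: ge_sup; first by exists (uof v 0); exists 0.
    move=> _ [m _ <-]; rewrite leNgt; apply/negP => h; apply: nk; by exists m.
  by rewrite mulr0.
have [uP0|uP0] := eqVneq (uof P k1) 0; first by rewrite uP0 mul0r.
have hk1 : 0 < uof P k1 by rewrite lt_def uP0 uof_ge0.
have dr : rdec (uof v) by move=> e e0; have [N HN] := dv e e0; exists N.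
have drP : rdec (uof P).
  move=> e e0; exists W.+1 => k hk; rewrite /uof sP ?(absK0 Hu) ?mul0r //; lia.
have [kv [Hv1 Hv2]] := attain_min dr hk0.
have [kP [HP1 HP2]] := attain_min drP hk1.
have gv : Pilot.Defs.gnorm absK r v = uof v kv by apply: gnorm_max.
have Pv0 : 0 < uof v kv by apply: lt_le_trans hk0 (Hv1 _).
have PP0 : 0 < uof P kP by apply: lt_le_trans hk1 (HP1 _).
have PkP : P kP != 0.
  by apply/eqP => e; move: PP0; rewrite /uof e (absK0 Hu) mul0r ltxx.
have hkP : - W%:Z <= kP <= 0.
  apply/negPn/negP => h; move/eqP: PkP; apply; apply: sP; move: h; lia.
set m := kP + kv.
have rm0 : 0 < r ^ m := exprz_gt0 m r0.
have j0lt : (absz (- kP) < W.+1)%N by lia.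
pose j0 := Ordinal j0lt.
have key : forall j : 'I_W.+1, absK (P (- j%:Z) * v (m + j%:Z)) * r ^ m =
    uof P (- j%:Z) * uof v (m + j%:Z).
  move=> j; rewrite /uof (absKM Hu) mulrACA -expfzDr ?gt_eqF //; congr (_ * r ^ _); ring.
have main : absK (P (- j0%:Z) * v (m + j0%:Z)) * r ^ m = uof P kP * uof v kv.
  rewrite key /=.
  have -> : - (absz (- kP))%:Z = kP by lia.
  have -> : m + (absz (- kP))%:Z = kv by rewrite /m; lia.
  by [].
have Qm : absK (pm W P v m) * r ^ m = uof P kP * uof v kv.
  rewrite /pm (bigD1 j0) //= (absK_dom Hu Hp1 Hp0) //.
  rewrite -(ltr_pM2r rm0) main -ltr_pdivlMr //.
  apply: (absK_sum_lt Hu); first by apply: divr_gt0 => //; apply: mulr_gt0.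
  move=> j hj; rewrite ltr_pdivlMr // key.
  have jne : (j : nat) != j0 by [].
  case: (ltgtP (- j%:Z) kP) => c.
  - apply: prod_lt; [exact: uof_ge0 | exact: HP2 | exact: uof_ge0 | exact: Hv1 | exact: Pv0].
  - rewrite mulrC [X in _ < X]mulrC; apply: prod_lt; [exact: uof_ge0 | | exact: uof_ge0 | exact: HP1 | exact: PP0].
    apply: Hv2; rewrite /m; lia.
  - exfalso; move/eqP: jne; apply; rewrite /=; lia.
apply: le_trans (gnorm_ge m dQ); rewrite /uof Qm gv.
by rewrite ler_wpM2r ?uof_ge0 // HP1.
Qed.
End Gn.


Import numFieldNormedType.Exports.
Local Open Scope classical_set_scope.

Lemma final_contra (R : realType) (u : nat -> R) (L c : R) : 0 < L -> L < c ->
  (forall s, (0 < s)%N -> u s = 0 \/ c <= u s) -> ~ (u n @[n --> \oo] --> L).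
Proof.
move=> L0 Lc H cv.
have h1 : \forall t \near \oo, 0 < u t by apply: (cvgr_gt L cv 0 L0).
have h2 : \forall t \near \oo, (0 < t)%N by exists 1%N.
have h3 : \forall t \near \oo, c <= u t.
  near=> t.
  have ht1 : 0 < u t by near: t; exact: h1.
  have ht2 : (0 < t)%N by near: t; exact: h2.
  case: (H t ht2) => // e.
  by move: ht1; rewrite e ltxx.
have h : c <= L by apply: (cvgr_to_ge cv h3). move: (lt_le_trans Lc h); rewrite ltxx.
Unshelve. all: by end_near.
Qed.

Lemma point0 (R : realType) : (point : R) = 0.
Proof. by []. Qed.


Local Open Scope classical_set_scope.
Lemma absK_exp {R : realType} {K : fieldType} {absK : K -> R} :
  ultrametric_abs absK -> forall (x : K) (s : nat), absK (x ^+ s) = absK x ^+ s.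
Proof.
move=> Hu x; elim=> [|s IH]; first by rewrite !expr0 (absK1 Hu).
by rewrite !exprS (absKM Hu) IH.
Qed.

Unset Implicit Arguments. Set Strict Implicit. Set Printing Implicit Defensive.

Theorem mainTheorem4 (R : realType) (K : fieldType) (absK : K -> R)
    (p : nat) (pi : K) (a b : R) (n : nat) (G : 'I_n -> 'I_n -> int -> K) :
  [pchar K] =i pred0 ->
  ultrametric_abs absK -> K_complete absK ->
  prime p -> absK p%:R < 1 ->
  pi ^+ p.-1 + p%:R = 0 ->
  0 < a -> a <= b -> b < 1 ->
  (forall i j, analytic_on absK a b (G i j)) ->
  robba absK pi a b G ->
  forall f : 'I_n -> int -> K,
    (forall i, analytic_on absK a b (f i)) ->
    (forall i m, conn absK (tensorL pi G) f i m = 0) ->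
    forall i m, f i m = 0.
Proof.
move=> hchar Hu Hc hp Hp1 hpi a0 ab b1 Gan rob f fan hor i m.
have Hp0 : (0 < p)%N := prime_gt0 hp.
case: (eqVneq (f i m) 0) => // hne; exfalso.
have hpK : p%:R != 0 :> K.
  have := hchar p; rewrite !inE hp /= => h; by rewrite h.
have pi0 : pi != 0.
  apply/eqP => e; move: hpi; rewrite e expr0n.
  have -> : (p.-1 == 0)%N = false by have := prime_gt1 hp; lia.
  by rewrite add0r => /eqP; rewrite (negbTE hpK).
have ra : a <= a <= b by rewrite lexx ab.
have conv : forall i l m', exists L, tsum_to absK (fun k => G i l k * f l (m' - k)) L.
  move=> i' l m'; apply: (tsum_conv Hu Hp1 Hp0 Hc).
  apply: (prod_decays Hu Hp1 Hp0 m' a0); [exact: Gan i' l a ra | exact: fan l a ra].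
have DP : forall s i', Dnum absK G 1 f s i' = pm (2 * s) (Pser pi s) (f i').
  by move=> s i'; apply: funext => m'; apply: (Dnum_pm Hu Hp1 Hp0 conv hor).
pose c := absK pi / a ^+ 2.
have c0 : 0 < c.
  rewrite divr_gt0 ?exprn_gt0 // lt_def (absK_eq0 Hu) pi0 (absK_ge0 Hu Hp1 Hp0) //.
have cs : forall s, uof absK a (Pser pi s) (- (2 * s)%N%:Z) = c ^+ s.
  move=> s; rewrite /uof (Pser_lead Hp1 Hp0 pi s) (absK_exp Hu) /c exprMn exprVn -exprM.
  by rewrite -exprnN.
have fdec : forall i', adec absK a (f i') := fun i' => fan i' a ra.
have ufm : 0 < uof absK a (f i) m.
  rewrite /uof mulr_gt0 ?exprz_gt0 // lt_def (absK_eq0 Hu) hne (absK_ge0 Hu Hp1 Hp0) //.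
have vf0 : 0 < vnorm absK a f.
  rewrite /vnorm; apply: lt_le_trans (le_bigmax _ _ i).
  exact: lt_le_trans ufm (gnorm_ge m (fdec i)).
have key : forall s, c ^+ s * vnorm absK a f <= vnorm absK a (Dnum absK G 1 f s).
  move=> s; have cs0 : 0 < c ^+ s := exprn_gt0 s c0.
  have Vge : forall i', Pilot.Defs.gnorm absK a (Dnum absK G 1 f s i') <= vnorm absK a (Dnum absK G 1 f s).
    by move=> i'; rewrite /vnorm; apply: (le_bigmax _ (fun i => Pilot.Defs.gnorm absK a (Dnum absK G 1 f s i)) i').
  rewrite mulrC -(ler_pdivlMr _ _ cs0).
  rewrite {1}/vnorm; apply: bigmax_le => [|i' _].
    apply: divr_ge0; last exact: ltW.
    apply: le_trans (Vge i); rewrite DP; apply: (gnorm_ge0 Hu Hp1 Hp0 a0).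
    exact: (adec_pm Hu Hp1 Hp0 a0).
  rewrite ler_pdivlMr // mulrC -(cs s); apply: le_trans (Vge i').
  rewrite DP; apply: (pm_lower Hu Hp1 Hp0 a0); first exact: fdec.
  exact: (Pser_supp Hp1 Hp0).
have gp1 : Pilot.Defs.gnorm absK a (poly_ser (1 : {poly K})) = 1.
  rewrite (@gnorm_max _ _ absK a _ 0).
    by rewrite /uof poly_ser1 eqxx (absK1 Hu) expr0z mulr1.
  move=> k; rewrite /uof !poly_ser1 eqxx; case: eqP => [->|_]; first by [].
  by rewrite (absK0 Hu) mul0r (absK1 Hu) expr0z mulr1 ler01.
have opn : forall s, opnorm_pow absK a b G a s = 0 \/ c ^+ s <= opnorm_pow absK a b G a s.
  move=> s; rewrite /opnorm_pow.
  set S := (X in sup X).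
  have St : S (vnorm absK a (Dnum absK G 1 f s) /
      (vnorm absK a f * Pilot.Defs.gnorm absK a (poly_ser 1) ^+ s)).
    exists f, 1; split => //; [exact: oner_neq0 | exact: lt0r_neq0].
  case: (pselect (has_ubound S)) => hS.
    right; have hle := ub_le_sup hS St; apply: le_trans hle.
    rewrite gp1 expr1n mulr1 ler_pdivlMr // mulrC; exact: key.
  by left; apply: sup_out => -[_ h]; apply: hS.
have api : 0 < absK pi by rewrite lt_def (absK_eq0 Hu) pi0 (absK_ge0 Hu Hp1 Hp0).
have := rob a ra; rewrite /Pilot.Defs.radius /spec_norm.
set L := (X in absK pi / X) => hL.
have L0 : L != 0.
  apply/eqP => e; move: hL; rewrite e invr0 mulr0 => e'.
  by move: a0; rewrite -e' ltxx.
have Lv : L = absK pi / a by rewrite -hL invf_div mulrC divfK // lt0r_neq0.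
have cv : (fun s : nat => powR (opnorm_pow absK a b G a s) (s%:R)^-1) @ \oo --> L.
  by apply: cvgNpoint.
apply: (final_contra (c := c) _ _ _ cv).
- by rewrite Lv divr_gt0.
- rewrite Lv /c ltr_pM2l // ltf_pV2 ?posrE ?exprn_gt0 //.
  by rewrite expr2 -[X in _ < X]mulr1 ltr_pM2l //; apply: le_lt_trans ab b1.
- move=> s s0; have sR : (s%:R : R) != 0 by rewrite pnatr_eq0 -lt0n.
  case: (opn s) => [->|h]; first by left; rewrite powR0 // invr_neq0.
  right.
  have -> : c = powR (c ^+ s) (s%:R)^-1.
    by rewrite -powR_mulrn ?ltW // -powRrM mulfV // powRr1 // ltW.
  apply: ge0_ler_powR => //.
  + by rewrite nnegrE exprn_ge0 // ltW.
  + by rewrite nnegrE; apply: le_trans (exprn_ge0 s (ltW c0)) h.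
Qed.
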